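(* Let $p\in(0,1)$, $\beta>0$, $\mu_P,\mu_N\in\mathbb R^d$ with $\mu_{pn}:=\mu_P-\mu_N\neq 0$, and let $\Sigma_P$ be symmetric positive semidefinite and $\Sigma_N$ symmetric positive definite $d\times d$ matrices. Let $\pi(\alpha)=\sqrt{(1-\alpha)/\alpha}$ for $\alpha\in(0,1)$ and $Q_F(\alpha_P,\alpha_N)=\frac{(1-p)\alpha_N+\beta^2p\alpha_P}{1-\alpha_P}$. Consider sequences generated as follows (the alternating descent scheme of the MPMF algorithm): start with $w_1=\mu_{pn}/\|\mu_{pn}\|$; at round $t$, given a unit vector $w_t$ with $C_t:=w_t^T\mu_{pn}>0$, set $A_t=\sqrt{w_t^T\Sigma_P w_t}$, $B_t=\sqrt{w_t^T\Sigma_N w_t}$, and let $(\alpha_{P,t},\alpha_{N,t})$ be a minimizer of $Q_F(\alpha_P,\alpha_N)$ over $\{(\alpha_P,\alpha_N)\in(0,1)^2:\ \pi(\alpha_N)B_t+\pi(\alpha_P)A_t=C_t\}$ (assumed to exist); set $\tau_t=\pi(\alpha_{P,t})$, $\lambda_t(w)=\frac{w^T\mu_{pn}-\tau_t\sqrt{w^T\Sigma_P w}}{\sqrt{w^T\Sigma_N w}}$, $\eta_t=\lambda_t(w_t)$, and choose a unit vector $w_{t+1}$ with $\lambda_t(w_{t+1})\ge\eta_t$ (either $w_{t+1}=w_t$, or a unit vector with $f_t(w_{t+1})\ge 0$ where $f_t(w)=w^T\mu_{pn}-\tau_t\sqrt{w^T\Sigma_P w}-\eta_t\sqrt{w^T\Sigma_N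 w}$). Then the sequence of objective values $Q_F(\alpha_{P,t},\alpha_{N,t})$ is monotonically non-increasing in $t$ and converges.
   Context: This is the minimax probability machine for the $F_\beta$ measure (MPMF): the problem is $\min_{\alpha_P,\alpha_N,w} \frac{(1-p)\alpha_N+\beta^2p\alpha_P}{1-\alpha_P}$ subject to $\|w\|=1$ and $\pi(\alpha_N)\sqrt{w^T\Sigma_N w}+\pi(\alpha_P)\sqrt{w^T\Sigma_P w}=w^T\mu_{pn}$, where $\mu_P,\Sigma_P$ ($\mu_N,\Sigma_N$) are the mean and covariance of the positive (negative) class, $p$ the positive class proportion, and $\alpha_P,\alpha_N$ worst-case false negative and false positive rates. The algorithm alternates between minimizing over $(\alpha_P,\alpha_N)$ for fixed $w$ and, for fixed $\alpha_P$, improving $w$ so as to decrease $\alpha_N$ (the new value being $\alpha_{N,t}'=1/(1+\lambda_t(w_{t+1})^2)$). *)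

(* Defs.v *)
From HB Require Import structures.
From mathcomp Require Import all_boot all_order all_algebra.
From mathcomp Require Import all_classical all_reals all_analysis.
Set Implicit Arguments. Unset Strict Implicit. Unset Printing Implicit Defensive.
Import Order.TTheory GRing.Theory Num.Theory numFieldNormedType.Exports.
Local Open Scope ring_scope.

Section MPMF.
Variables (R : realType) (d : nat).

Definition dotv (u v : 'cV[R]_d) : R := (u^T *m v) 0 0.
Definition enorm (u : 'cV[R]_d) : R := Num.sqrt (dotv u u).
Definition qform (S : 'M[R]_d) (w : 'cV[R]_d) : R := (w^T *m S *m w) 0 0.

Definition symmetric_mx (S : 'M[R]_d) : Prop := S^T = S.
Definition psd_mx (S : 'M[R]_d) : Prop :=
  symmetric_mx S /\ forall x : 'cV[R]_d, 0 <= qform S x.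
Definition pd_mx (S : 'M[R]_d) : Prop :=
  symmetric_mx S /\ forall x : 'cV[R]_d, x != 0 -> 0 < qform S x.
End MPMF.

Definition piF {R : realType} (a : R) : R := Num.sqrt ((1 - a) / a).

Definition QF {R : realType} (p beta aP aN : R) : R :=
  ((1 - p) * aN + beta ^+ 2 * p * aP) / (1 - aP).

(* feasible set at round t with A = sqrt(w^T SP w), B = sqrt(w^T SN w), C = w^T mu *)
Definition feasible {R : realType} (A B C aP aN : R) : Prop :=
  0 < aP < 1 /\ 0 < aN < 1 /\ piF aN * B + piF aP * A = C.

Definition is_minimizer {R : realType} (p beta A B C aP aN : R) : Prop :=
  feasible A B C aP aN /\
  forall bP bN, feasible A B C bP bN -> QF p beta aP aN <= QF p beta bP bN.

Definition lambdaF {R : realType} {d : nat} (SP SN : 'M[R]_d) (mu : 'cV[R]_d)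
  (tau : R) (w : 'cV[R]_d) : R :=
  (dotv w mu - tau * Num.sqrt (qform SP w)) / Num.sqrt (qform SN w).

(* Main.v *)
Require Import Defs.
From HB Require Import structures.
From mathcomp Require Import all_boot all_order all_algebra.
From mathcomp Require Import all_classical all_reals all_analysis.
From mathcomp Require Import ring lra.
Import Order.TTheory GRing.Theory Num.Theory numFieldNormedType.Exports.
Local Open Scope ring_scope.

Section Aux.
Variable R : realType.

Lemma piF_gt0 (a : R) : 0 < a < 1 -> 0 < piF a.
Proof.
move=> /andP[a0 a1]; rewrite /piF sqrtr_gt0 divr_gt0 //; lra.
Qed.

Lemma piF_sq (a : R) : 0 < a < 1 -> a * (1 + piF a ^+ 2) = 1.
Proof.
move=> /andP[a0 a1]; rewrite /piF sqr_sqrtr; last by rewrite divr_ge0 //; lra.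
rewrite mulrDr mulr1 mulrCA mulfV ?gt_eqF //; lra.
Qed.

Lemma piF_inv (x : R) : 0 <= x -> piF ((1 + x ^+ 2)^-1) = x.
Proof.
move=> x0; rewrite /piF.
have h : 0 < 1 + x ^+ 2 by rewrite ltr_pwDl // sqr_ge0.
rewrite invrK.
have -> : (1 - (1 + x ^+ 2)^-1) * (1 + x ^+ 2) = x ^+ 2.
  by rewrite mulrBl mul1r mulVf ?gt_eqF //; ring.
by rewrite sqrtr_sqr ger0_norm.
Qed.

Lemma QF_mono (p beta aP x y : R) : p < 1 -> aP < 1 -> x <= y ->
  QF p beta aP x <= QF p beta aP y.
Proof.
move=> p1 aP1 xy; rewrite /QF ler_wpM2r //.
  by rewrite invr_ge0; lra.
rewrite lerD2r ler_wpM2l //; lra.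
Qed.

Lemma QF_ge0 (p beta aP aN : R) : 0 < p < 1 -> 0 < aP < 1 -> 0 < aN < 1 ->
  0 <= QF p beta aP aN.
Proof.
move=> /andP[p0 p1] /andP[a0 a1] /andP[b0 b1]; rewrite /QF divr_ge0 //; last lra.
apply: addr_ge0; first by apply: mulr_ge0; lra.
by apply: mulr_ge0; [apply: mulr_ge0; [exact: sqr_ge0|exact: ltW]|exact: ltW].
Qed.

End Aux.
Arguments piF_gt0 {R a}. Arguments piF_sq {R a}. Arguments piF_inv {R}. Arguments QF_mono {R}. Arguments QF_ge0 {R}.

Lemma enorm_neq0 (R : realType) d (w : 'cV[R]_d) : enorm w = 1 -> w != 0.
Proof.
move=> h; apply/eqP => w0; move: h; rewrite w0 /enorm /dotv.
by rewrite trmx0 mul0mx mxE sqrtr0 => /eqP; rewrite eq_sym oner_eq0.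
Qed.

Theorem theorem1 (R : realType) (d : nat) (p beta : R)
  (muP muN : 'cV[R]_d) (SP SN : 'M[R]_d)
  (w : nat -> 'cV[R]_d) (aP aN : nat -> R) :
  0 < p < 1 -> 0 < beta ->
  muP - muN != 0 ->
  psd_mx SP -> pd_mx SN ->
  (* w_1 = mu_pn / ||mu_pn|| (rounds indexed from 0) *)
  w 0%N = (enorm (muP - muN))^-1 *: (muP - muN) ->
  (* every w_t is a unit vector *)
  (forall t, enorm (w t) = 1) ->
  (* (aP t, aN t) minimizes Q_F over the feasible set determined by w_t *)
  (forall t, is_minimizer p beta
     (Num.sqrt (qform SP (w t))) (Num.sqrt (qform SN (w t)))
     (dotv (w t) (muP - muN)) (aP t) (aN t)) ->
  (* update step: lambda_t(w_{t+1}) >= eta_t = lambda_t(w_t) *)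
  (forall t, lambdaF SP SN (muP - muN) (piF (aP t)) (w t.+1) >=
             lambdaF SP SN (muP - muN) (piF (aP t)) (w t)) ->
  (forall t, QF p beta (aP t.+1) (aN t.+1) <= QF p beta (aP t) (aN t)) /\
  cvgn (fun t => QF p beta (aP t) (aN t)).
Proof.
move=> hp hbeta _ _ [_ hSN] _ hunit hmin hlam.
have Bpos t : 0 < Num.sqrt (qform SN (w t)).
  by rewrite sqrtr_gt0 hSN // enorm_neq0.
have step t : QF p beta (aP t.+1) (aN t.+1) <= QF p beta (aP t) (aN t).
  have [[hP [hN hfeas]] _] := hmin t.
  have [_ hmin1] := hmin t.+1.
  set tau := piF (aP t).
  set lam := lambdaF SP SN (muP - muN) tau (w t.+1).
  have eta_eq : lambdaF SP SN (muP - muN) tau (w t) = piF (aN t).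
    rewrite /lambdaF -hfeas /tau addrK mulfK //; exact/lt0r_neq0/Bpos.
  have hl := hlam t; rewrite -/tau -/lam eta_eq in hl.
  have pN := piF_gt0 hN.
  have lam0 : 0 < lam by apply: lt_le_trans hl.
  set aN' := (1 + lam ^+ 2)^-1.
  have h1 : 0 < 1 + lam ^+ 2 by rewrite ltr_pwDl // sqr_ge0.
  have aN'0 : 0 < aN' by rewrite invr_gt0.
  have aN'1 : aN' * (1 + lam ^+ 2) = 1 by rewrite mulVf // gt_eqF.
  have lam2 : 0 < lam ^+ 2 by rewrite exprn_gt0.
  have aN'lt1 : aN' < 1 by nra.
  have feas' : feasible (Num.sqrt (qform SP (w t.+1)))
      (Num.sqrt (qform SN (w t.+1))) (dotv (w t.+1) (muP - muN)) (aP t) aN'.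
    split=> //; split; first by rewrite aN'0 aN'lt1.
    rewrite /aN' piF_inv ?ltW // /lam /lambdaF -/tau mulfVK ?subrK //.
    exact/lt0r_neq0/Bpos.
  apply: le_trans (hmin1 _ _ feas') _.
  clearbody aN' lam tau.
  case/andP: hp => _ p1; case/andP: hP => _ aP1.
  apply: QF_mono => //.
  have hs := piF_sq hN.
  have hpl : piF (aN t) ^+ 2 <= lam ^+ 2.
    by nra.
  case/andP: hN => aN0 _.
  have : 0 <= aN t * aN' * (lam ^+ 2 - piF (aN t) ^+ 2).
    by apply: mulr_ge0; [apply: mulr_ge0; exact: ltW | rewrite subr_ge0].
  have -> : aN t * aN' * (lam ^+ 2 - piF (aN t) ^+ 2) =
      aN t * (aN' * (1 + lam ^+ 2)) - aN' * (aN t * (1 + piF (aN t) ^+ 2)).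
    by ring.
  by rewrite aN'1 hs !mulr1 subr_ge0.
split=> //.
apply: nonincreasing_is_cvgn; first exact/nonincreasing_seqP.
exists 0 => _ [t _ <-].
have [[hP [hN _]] _] := hmin t.
exact: QF_ge0.
Qed.
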